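(* For every function $f:\mathbb{N}\to\mathbb{N}$ and all positive integers $a$ and $d$, the set $\{2^{f(n)}(a+dn)\mid n\in\mathbb{N}\}$ is a sufficient set.
   Context: $\mathbb{N}=\{0,1,2,\dots\}$. Let $T:\mathbb{Z}\to\mathbb{Z}$ be $T(x)=x/2$ if $x$ is even and $T(x)=(3x+1)/2$ if $x$ is odd. The $T$-orbit of $x$ is the sequence $x,T(x),T^2(x),\dots$. Two positive integers $x,y$ merge if there exist nonnegative integers $k,j$ with $T^k(x)=T^j(y)$. A set $S$ of positive integers is sufficient if every positive integer merges with some element of $S$. *)

(* Defs.v *)
From Stdlib Require Import ZArith.
Open Scope Z_scope.

Definition T (x : Z) : Z :=
  if Z.even x then x / 2 else (3 * x + 1) / 2.

Definition Titer (k : nat) (x : Z) : Z := Nat.iter k T x.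

Definition merge (x y : Z) : Prop :=
  exists k j : nat, Titer k x = Titer j y.

Definition sufficient (S : Z -> Prop) : Prop :=
  (forall s, S s -> 0 < s) /\
  (forall x, 0 < x -> exists s, S s /\ merge x s).

(* Main.v *)
Require Import Defs.
From Stdlib Require Import ZArith Znumtheory Lia List Classical.
Import ListNotations.
Open Scope Z_scope.

Definition pw (b : Z) (n : nat) : Z := b ^ Z.of_nat n.

Lemma pw_0 b : pw b 0 = 1. Proof. reflexivity. Qed.
Lemma pw_S b n : pw b (S n) = b * pw b n.
Proof. unfold pw. rewrite Nat2Z.inj_succ, Z.pow_succ_r; lia. Qed.
Lemma pw_add b n k : pw b (n + k) = pw b n * pw b k.
Proof. unfold pw. rewrite Nat2Z.inj_add, Z.pow_add_r; lia. Qed.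
Lemma pw_mul b n k : pw b (n * k) = pw (pw b n) k.
Proof. unfold pw. rewrite Nat2Z.inj_mul, Z.pow_mul_r; lia. Qed.
Lemma pw_mulb a b n : pw (a * b) n = pw a n * pw b n.
Proof. unfold pw. apply Z.pow_mul_l. Qed.
Lemma pw_pos b n : 0 < b -> 0 < pw b n.
Proof. intros; unfold pw; apply Z.pow_pos_nonneg; lia. Qed.
Lemma pw_1 n : pw 1 n = 1.
Proof. unfold pw. apply Z.pow_1_l. lia. Qed.

Lemma T_even q : T (2 * q) = q.
Proof.
  unfold T. replace (Z.even (2 * q)) with true by (rewrite Z.even_mul; reflexivity).
  rewrite Z.mul_comm, Z.div_mul; lia.
Qed.
Lemma T_odd q : T (2 * q + 1) = 3 * q + 2.
Proof.
  unfold T. replace (Z.even (2 * q + 1)) with false by (rewrite Z.even_add, Z.even_mul; reflexivity).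
  replace (3 * (2 * q + 1) + 1) with ((3 * q + 2) * 2) by ring.
  rewrite Z.div_mul; lia.
Qed.
Lemma par y : exists q, y = 2 * q \/ y = 2 * q + 1.
Proof.
  exists (y / 2). pose proof (Z.div_mod y 2 ltac:(lia)).
  pose proof (Z.mod_pos_bound y 2 ltac:(lia)). lia.
Qed.

Lemma Titer_S_r n y : Titer (S n) y = Titer n (T y).
Proof.
  unfold Titer. revert y. induction n; intros y; simpl; auto.
  simpl in IHn. rewrite <- IHn. reflexivity.
Qed.
Lemma Titer_add a b y : Titer (a + b) y = Titer a (Titer b y).
Proof. unfold Titer. apply Nat.iter_add. Qed.
Lemma Titer_0 y : Titer 0 y = y. Proof. reflexivity. Qed.

Lemma halving k y : Titer k (pw 2 k * y) = y.
Proof.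
  revert y; induction k; intros y.
  - rewrite pw_0, Z.mul_1_l. reflexivity.
  - rewrite Titer_S_r, pw_S. rewrite <- Z.mul_assoc, T_even. apply IHk.
Qed.

Lemma T_pos y : 0 < y -> 0 < T y.
Proof. intros H. destruct (par y) as [q [-> | ->]]; [rewrite T_even|rewrite T_odd]; lia. Qed.
Lemma T_nonpos y : y <= 0 -> T y <= 0.
Proof. intros H. destruct (par y) as [q [-> | ->]]; [rewrite T_even|rewrite T_odd]; lia. Qed.
Lemma Titer_pos n y : 0 < y -> 0 < Titer n y.
Proof. induction n; intros; simpl; auto. apply T_pos. apply IHn; auto. Qed.
Lemma Titer_nonpos n y : y <= 0 -> Titer n y <= 0.
Proof. induction n; intros; simpl; auto. apply T_nonpos. apply IHn; auto. Qed.

Fixpoint oT (k : nat) (r : Z) : nat :=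
  match k with O => O | S k' => ((if Z.even r then 0 else 1) + oT k' (T r))%nat end.

Lemma T_shift r w : T (r + 2 * w) = T r + pw 3 (if Z.even r then 0 else 1) * w.
Proof.
  destruct (par r) as [q [-> | ->]].
  - replace (2 * q + 2 * w) with (2 * (q + w)) by ring. rewrite !T_even.
    replace (Z.even (2 * q)) with true by (rewrite Z.even_mul; reflexivity). cbv beta iota. rewrite pw_0. lia.
  - replace (2 * q + 1 + 2 * w) with (2 * (q + w) + 1) by ring. rewrite !T_odd.
    replace (Z.even (2 * q + 1)) with false by (rewrite Z.even_add, Z.even_mul; reflexivity). cbv beta iota.
    replace (pw 3 1) with 3 by reflexivity. lia.
Qed.

Lemma terras k : forall r s, Titer k (r + pw 2 k * s) = Titer k r + pw 3 (oT k r) * s.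
Proof.
  induction k; intros r s.
  - simpl. unfold Titer; simpl. unfold pw; simpl. lia.
  - rewrite !Titer_S_r. rewrite pw_S.
    replace (r + 2 * pw 2 k * s) with (r + 2 * (pw 2 k * s)) by ring.
    rewrite T_shift. rewrite Z.mul_assoc, (Z.mul_comm _ (pw 2 k)), <- Z.mul_assoc.
    rewrite IHk. simpl oT. rewrite pw_add. ring.
Qed.

Fixpoint oo (v : list bool) : nat :=
  match v with [] => O | b :: v' => ((if b then 1 else 0) + oo v')%nat end.
Fixpoint cc (v : list bool) : Z :=
  match v with [] => 0 | b :: v' => (if b then pw 3 (oo v') else 0) + 2 * cc v' end.

Lemma pw3_odd k : exists s, pw 3 k = 2 * s + 1.
Proof.
  induction k. exists 0. reflexivity.
  destruct IHk as [s Hs]. exists (3 * s + 1). rewrite pw_S, Hs. ring.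
Qed.

Lemma lemA v : forall y u, pw 3 (oo v) * y + cc v = pw 2 (length v) * u -> Titer (length v) y = u.
Proof.
  induction v as [|b v IH]; intros y u H.
  - cbn [oo cc length] in H. rewrite !pw_0 in H. unfold Titer; simpl. lia.
  - cbn [length]. rewrite Titer_S_r. apply IH. cbn [oo cc length] in H. rewrite pw_S in H.
    destruct (pw3_odd (oo v)) as [s Hs].
    destruct b; cbv beta iota in H.
    + rewrite Nat.add_1_l, pw_S in H.
      destruct (par y) as [q [-> | ->]].
      * exfalso. rewrite Hs in H. lia.
      * rewrite T_odd. lia.
    + rewrite Nat.add_0_l in H. destruct (par y) as [q [-> | ->]].
      * rewrite T_even. lia.
      * exfalso. rewrite Hs in H. lia.
Qed.

Lemma oo_app v1 v2 : oo (v1 ++ v2) = (oo v1 + oo v2)%nat.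
Proof. induction v1; simpl; auto. rewrite IHv1. lia. Qed.

Lemma cc_app v1 v2 : cc (v1 ++ v2) = pw 3 (oo v2) * cc v1 + pw 2 (length v1) * cc v2.
Proof.
  induction v1 as [|b v1 IH]; cbn [app cc length oo].
  - rewrite pw_0. ring.
  - rewrite IH, oo_app, pw_S. destruct b.
    + rewrite pw_add. ring.
    + ring.
Qed.

Lemma cc_zeros n : cc (repeat false n) = 0.
Proof. induction n; cbn [repeat cc]; auto. rewrite IHn. ring. Qed.
Lemma oo_zeros n : oo (repeat false n) = 0%nat.
Proof. induction n; simpl; auto. Qed.
Lemma oo_ones n : oo (repeat true n) = n.
Proof. induction n; simpl; auto. Qed.
Lemma cc_ones n : cc (repeat true n) = pw 3 n - pw 2 n.
Proof.
  induction n; cbn [repeat cc]. rewrite !pw_0. ring.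
  rewrite IHn, oo_ones, !pw_S. ring.
Qed.

Lemma dvd_pow_sub1 m b n : (m | b - 1) -> (m | pw b n - 1).
Proof.
  intros H. induction n.
  - rewrite pw_0. replace (1-1) with 0 by ring. apply Z.divide_0_r.
  - rewrite pw_S. replace (b * pw b n - 1) with (b * (pw b n - 1) + (b - 1)) by ring.
    apply Z.divide_add_r; auto. apply Z.divide_mul_r; auto.
Qed.

Lemma pigeon M : forall f : nat -> nat, (forall i, (i <= M)%nat -> (f i < M)%nat) ->
  exists i j, (i < j <= M)%nat /\ f i = f j.
Proof.
  induction M; intros f Hf.
  - specialize (Hf 0%nat ltac:(lia)). lia.
  - destruct (classic (exists i, (i <= M)%nat /\ f i = f (S M))) as [[i [Hi Hfi]] | Hn].
    + exists i, (S M). split; [lia | auto].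
    + set (g := fun i => if Nat.ltb (f i) (f (S M)) then f i else (f i - 1)%nat).
      destruct (IHM g) as [i [j [Hij Hg]]].
      * intros i Hi. unfold g. pose proof (Hf i ltac:(lia)). pose proof (Hf (S M) ltac:(lia)).
        assert (f i <> f (S M)) by (intro; apply Hn; exists i; auto).
        destruct (Nat.ltb_spec (f i) (f (S M))); lia.
      * exists i, j. split; [lia|]. unfold g in Hg.
        assert (f i <> f (S M)) by (intro; apply Hn; exists i; split; auto; lia).
        assert (f j <> f (S M)) by (intro; apply Hn; exists j; split; auto; lia).
        destruct (Nat.ltb_spec (f i) (f (S M))); destruct (Nat.ltb_spec (f j) (f (S M))); lia.
Qed.

Lemma rel_prime_pw m b n : rel_prime m b -> rel_prime m (pw b n).
Proof.
  intros H. induction n.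
  - rewrite pw_0. apply rel_prime_sym, rel_prime_1.
  - rewrite pw_S. apply rel_prime_mult; auto.
Qed.

Lemma period b m : 0 < m -> rel_prime m b -> exists P, (1 <= P)%nat /\ (m | pw b P - 1).
Proof.
  intros Hm Hr.
  destruct (pigeon (Z.to_nat m) (fun i => Z.to_nat (pw b i mod m))) as [i [j [Hij He]]].
  { intros i _. pose proof (Z.mod_pos_bound (pw b i) m Hm). lia. }
  exists (j - i)%nat. split; [lia|].
  pose proof (Z.mod_pos_bound (pw b i) m Hm). pose proof (Z.mod_pos_bound (pw b j) m Hm).
  apply Z2Nat.inj in He; try lia.
  assert (Hd : (m | pw b j - pw b i)).
  { exists (pw b j / m - pw b i / m).
    pose proof (Z.div_mod (pw b j) m ltac:(lia)). pose proof (Z.div_mod (pw b i) m ltac:(lia)). lia. }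
  replace j with (i + (j - i))%nat in Hd by lia. rewrite pw_add in Hd.
  replace (pw b i * pw b (j - i) - pw b i) with (pw b i * (pw b (j - i) - 1)) in Hd by ring.
  apply Gauss with (pw b i); auto. apply rel_prime_pw; auto.
Qed.

Lemma split_pow p : 1 < p -> forall n, 0 < n -> exists e q, n = pw p e * q /\ ~ (p | q).
Proof.
  intros Hp.
  assert (forall N n, (Z.to_nat n <= N)%nat -> 0 < n -> exists e q, n = pw p e * q /\ ~ (p | q)).
  { induction N; intros n Hn Hpos.
    - lia.
    - destruct (classic (p | n)) as [[k Hk] | Hnd].
      + assert (0 < k) by nia.
        destruct (IHN k) as [e [q [He Hq]]]; [nia | auto |].
        exists (S e), q. split; auto. rewrite pw_S. rewrite Hk, He. ring.
      + exists 0%nat, n. rewrite pw_0. split; auto; ring. }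
  intros n Hn. apply (H (Z.to_nat n)); auto.
Qed.

Lemma cube r0 w : ~ (3 | w) -> forall j, exists w',
  pw (1 + pw 3 (S r0) * w) (Nat.pow 3 j) = 1 + pw 3 (S r0 + j) * w' /\ ~ (3 | w').
Proof.
  intros Hw j. induction j.
  - exists w. rewrite Nat.add_0_r. simpl Nat.pow. unfold pw at 1. simpl. split; auto. lia.
  - destruct IHj as [w' [Hj Hw']].
    exists (w' + 3 * (pw 3 (r0 + j) * w' * w' + pw 3 (r0 + j) * pw 3 (r0 + j) * w' * w' * w')).
    split.
    + rewrite Nat.pow_succ_r', Nat.mul_comm, pw_mul. rewrite Hj.
      replace (S r0 + S j)%nat with (S (S (r0 + j))) by lia.
      replace (S r0 + j)%nat with (S (r0 + j)) by lia.
      rewrite !pw_S, pw_0. ring.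
    + intros H. apply Hw'. 
      assert (3 | 3 * (pw 3 (r0 + j) * w' * w' + pw 3 (r0 + j) * pw 3 (r0 + j) * w' * w' * w')) by (apply Z.divide_factor_l).
      destruct H as [a Ha]. destruct H0 as [b Hb]. exists (a - b). lia.
Qed.

Lemma digit q X : ~ (3 | X) -> exists d : nat, (d <= 2)%nat /\ (3 | q + X * Z.of_nat d).
Proof.
  intros HX.
  pose proof (Z.div_mod q 3 ltac:(lia)). pose proof (Z.mod_pos_bound q 3 ltac:(lia)).
  pose proof (Z.div_mod X 3 ltac:(lia)). pose proof (Z.mod_pos_bound X 3 ltac:(lia)).
  set (a := q / 3) in *. set (q0 := q mod 3) in *. set (b := X / 3) in *. set (x0 := X mod 3) in *.
  assert (x0 <> 0) by (intro E; apply HX; exists b; lia).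
  assert (Hq : q0 = 0 \/ q0 = 1 \/ q0 = 2) by lia.
  assert (Hx : x0 = 1 \/ x0 = 2) by lia.
  destruct Hq as [Hq|[Hq|Hq]].
  - exists 0%nat. split; [lia|]. exists a. change (Z.of_nat 0) with 0. lia.
  - destruct Hx as [Hx|Hx].
    + exists 2%nat. split; [lia|]. exists (a + 2 * b + 1). change (Z.of_nat 2) with 2. lia.
    + exists 1%nat. split; [lia|]. exists (a + b + 1). change (Z.of_nat 1) with 1. lia.
  - destruct Hx as [Hx|Hx].
    + exists 1%nat. split; [lia|]. exists (a + b + 1). change (Z.of_nat 1) with 1. lia.
    + exists 2%nat. split; [lia|]. exists (a + 2 * b + 2). change (Z.of_nat 2) with 2. lia.
Qed.

Lemma not3_mul a b : ~ (3 | a) -> ~ (3 | b) -> ~ (3 | a * b).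
Proof.
  intros Ha Hb H. apply prime_mult in H; [|apply prime_3]. tauto.
Qed.

Lemma pw_mod3 h f : (3 | h - 1) -> ~ (3 | pw h f).
Proof.
  intros H Hd. pose proof (dvd_pow_sub1 3 h f H).
  assert (3 | 1). { destruct Hd as [a Ha]; destruct H0 as [b Hb]. exists (a - b). lia. }
  apply Z.divide_1_r in H1. lia.
Qed.

Lemma digits r0 w h : h = 1 + pw 3 (S r0) * w -> ~ (3 | w) ->
  forall j A z, ~ (3 | A) -> (pw 3 (S r0) | z - A) ->
  exists f, (pw 3 (S r0 + j) | A * pw h f - z).
Proof.
  intros Hh Hw j. induction j; intros A z HA Hz.
  - exists 0%nat. rewrite Nat.add_0_r, pw_0. destruct Hz as [k Hk]. exists (-k). lia.
  - destruct (IHj A z HA Hz) as [f [q Hq]].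
    destruct (cube r0 w Hw j) as [w' [Hg Hw']]. rewrite <- Hh in Hg.
    assert (H3h : (3 | h - 1)).
    { rewrite Hh, pw_S. exists (pw 3 r0 * w). ring. }
    set (X := A * pw h f * w').
    assert (HX : ~ (3 | X)).
    { unfold X. apply not3_mul; auto. apply not3_mul; auto. apply pw_mod3; auto. }
    destruct (digit q X HX) as [dd [Hdd [c Hc]]].
    exists (f + Nat.pow 3 j * dd)%nat.
    rewrite (pw_add h), (pw_mul h), Hg.
    set (n := (S r0 + j)%nat) in *.
    replace (S r0 + S j)%nat with (S n) by (unfold n; lia).
    rewrite pw_S.
    assert (Hn1 : (3 | pw 3 n)). { unfold n. replace (S r0 + j)%nat with (S (r0 + j)) by lia. rewrite pw_S. apply Z.divide_factor_l. }
    destruct Hn1 as [e He].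
    assert (Hdd' : dd = 0%nat \/ dd = 1%nat \/ dd = 2%nat) by lia.
    destruct Hdd' as [-> | [-> | ->]].
    + simpl Z.of_nat in Hc. rewrite pw_0. exists c. rewrite Z.mul_1_r. nia.
    + simpl Z.of_nat in Hc. rewrite (pw_S (1 + pw 3 n * w') 0), pw_0.
      exists c. unfold X in Hc. nia.
    + simpl Z.of_nat in Hc. rewrite (pw_S (1 + pw 3 n * w') 1), (pw_S (1 + pw 3 n * w') 0), pw_0.
      exists (c + e * X * w'). unfold X in *. nia.
Qed.

Lemma mod9 u : ~ (3 | u) -> exists z U, pw 2 (S z) * u = 1 + 3 * U /\ (3 | U - 1).
Proof.
  intros Hu.
  pose proof (Z.div_mod u 9 ltac:(lia)). pose proof (Z.mod_pos_bound u 9 ltac:(lia)).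
  set (k := u / 9) in *. set (r := u mod 9) in *.
  assert (r <> 0) by (intro E; apply Hu; exists (3 * k); lia).
  assert (r <> 3) by (intro E; apply Hu; exists (3 * k + 1); lia).
  assert (r <> 6) by (intro E; apply Hu; exists (3 * k + 2); lia).
  assert (HR : r = 1 \/ r = 2 \/ r = 4 \/ r = 5 \/ r = 7 \/ r = 8) by lia.
  destruct HR as [E|[E|[E|[E|[E|E]]]]].
  - exists 1%nat, (12 * k + 1). change (pw 2 2) with 4. split; [lia|]. exists (4 * k). lia.
  - exists 0%nat, (6 * k + 1). change (pw 2 1) with 2. split; [lia|]. exists (2 * k). lia.
  - exists 5%nat, (192 * k + 85). change (pw 2 6) with 64. split; [lia|]. exists (64 * k + 28). lia.
  - exists 2%nat, (24 * k + 13). change (pw 2 3) with 8. split; [lia|]. exists (8 * k + 4). lia.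
  - exists 3%nat, (48 * k + 37). change (pw 2 4) with 16. split; [lia|]. exists (16 * k + 12). lia.
  - exists 4%nat, (96 * k + 85). change (pw 2 5) with 32. split; [lia|]. exists (32 * k + 28). lia.
Qed.

Definition Seg (R pad : nat) (b : bool) : list bool :=
  (if b then [false; true] else [true; false]) ++ repeat true (R - 1) ++ repeat false pad.

Lemma oo_Seg R pad b : (1 <= R)%nat -> oo (Seg R pad b) = R.
Proof. intros. unfold Seg. rewrite !oo_app, oo_ones, oo_zeros. destruct b; simpl; lia. Qed.
Lemma len_Seg R pad b : (1 <= R)%nat -> length (Seg R pad b) = (R + 1 + pad)%nat.
Proof. intros. unfold Seg. rewrite !length_app, !repeat_length. destruct b; simpl; lia. Qed.
Lemma cc_Seg R pad b : cc (Seg R pad b) = pw 3 (R - 1) * (if b then 2 else 1) + 4 * (pw 3 (R - 1) - pw 2 (R - 1)).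
Proof.
  unfold Seg. rewrite cc_app, cc_app, oo_app, oo_ones, oo_zeros, cc_zeros, cc_ones, Nat.add_0_r.
  rewrite pw_0. destruct b; cbn [cc oo length]; rewrite ?pw_0; change (pw 2 2) with 4; ring.
Qed.

Fixpoint Wl (R pad : nat) (bs : list bool) : list bool :=
  match bs with [] => [] | b :: bs' => Seg R pad b ++ Wl R pad bs' end.

Lemma oo_Wl R pad bs : (1 <= R)%nat -> oo (Wl R pad bs) = (R * length bs)%nat.
Proof. intros HR. induction bs; simpl; auto. rewrite oo_app, oo_Seg, IHbs; auto. lia. Qed.
Lemma len_Wl R pad bs : (1 <= R)%nat -> length (Wl R pad bs) = ((R + 1 + pad) * length bs)%nat.
Proof. intros HR. induction bs; simpl; auto. rewrite length_app, len_Seg, IHbs; auto. lia. Qed.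

Lemma cc_Wl R pad m bs : (1 <= R)%nat -> (m | pw 3 R - 1) -> (m | pw 2 (R + 1 + pad) - 1) ->
  (m | cc (Wl R pad bs) - (Z.of_nat (length bs) * cc (Seg R pad false) + Z.of_nat (oo bs) * pw 3 (R - 1))).
Proof.
  intros HR H3 H2. induction bs as [|b bs IH].
  - simpl. apply Z.divide_0_r.
  - cbn [Wl length oo]. rewrite cc_app, oo_Wl by auto. rewrite len_Seg by auto.
    assert (Hp : (m | pw 3 (R * length bs) - 1)) by (rewrite pw_mul; apply dvd_pow_sub1; auto).
    assert (Hc : cc (Seg R pad b) = cc (Seg R pad false) + (if b then 1 else 0) * pw 3 (R - 1)).
    { rewrite !cc_Seg. destruct b; ring. }
    rewrite Hc.
    destruct Hp as [x1 Hx1]. destruct H2 as [x2 Hx2]. destruct IH as [x3 Hx3].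
    exists (x1 * (cc (Seg R pad false) + (if b then 1 else 0) * pw 3 (R - 1)) + x2 * cc (Wl R pad bs) + x3).
    rewrite !Nat2Z.inj_add, !Nat2Z.inj_succ. destruct b; simpl Z.of_nat; lia.
Qed.

Lemma relp_of_prime p m : prime p -> ~ (p | m) -> rel_prime m p.
Proof. intros Hp H. apply rel_prime_sym, prime_rel_prime; auto. Qed.

Lemma core (u : Z) (t : nat) (m a : Z) : 0 < u -> ~ (3 | u) -> 0 < m -> ~ (2 | m) -> ~ (3 | m) ->
  exists y n, Titer n y = u /\ (pw 3 t * m | y - a).
Proof.
  intros Hu Hu3 Hm Hm2 Hm3.
  assert (Hr2 : rel_prime m 2) by (apply relp_of_prime; auto; apply prime_2).
  assert (Hr3 : rel_prime m 3) by (apply relp_of_prime; auto; apply prime_3).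
  destruct (period 2 m Hm Hr2) as [Q [HQ1 HQ]].
  destruct (period 3 m Hm Hr3) as [R [HR1 HR]].
  set (h := pw 2 (2 * Q)).
  assert (Hh4 : h = pw 4 Q) by (unfold h; rewrite pw_mul; reflexivity).
  assert (Hhm : (m | h - 1)) by (unfold h; rewrite Nat.mul_comm, pw_mul; apply dvd_pow_sub1; auto).
  assert (Hh3 : (3 | h - 1)) by (rewrite Hh4; apply dvd_pow_sub1; exists 1; ring).
  assert (Hhpos : 0 < h - 1).
  { rewrite Hh4. destruct Q; [lia|]. rewrite pw_S. pose proof (pw_pos 4 Q ltac:(lia)). lia. }
  destruct (split_pow 3 ltac:(lia) (h - 1) Hhpos) as [e [w [Hew Hw]]].
  destruct e as [|r0].
  { rewrite pw_0, Z.mul_1_l in Hew. rewrite Hew in Hh3. contradiction. }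
  assert (Hhdef : h = 1 + pw 3 (S r0) * w) by lia.
  destruct (mod9 u Hu3) as [z [U [HzU HU]]].
  assert (HU3 : ~ (3 | U)).
  { intros [c Hc]. destruct HU as [c' Hc']. lia. }
  destruct (digits 0 1 4 ltac:(reflexivity) ltac:(intros [c Hc]; lia) r0 (2 * U) (-1))
    as [f0 Hf0].
  { apply not3_mul; auto. intros [c Hc]; lia. }
  { destruct HU as [c Hc]. change (pw 3 1) with 3. exists (- 1 - 2 * c). lia. }
  simpl (S 0 + r0)%nat in Hf0.
  set (eps := S (2 * f0)).
  assert (Heps : pw 2 eps = 2 * pw 4 f0) by (unfold eps; rewrite pw_S, pw_mul; reflexivity).
  set (r := S r0).
  set (pad := ((Q - 1) * (R + 1))%nat).
  set (lam := (R + 1 + pad)%nat).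
  assert (Hlam : lam = (Q * (R + 1))%nat) by (unfold lam, pad; destruct Q; [lia|]; simpl; lia).
  assert (Hlm : (m | pw 2 lam - 1)) by (rewrite Hlam, pw_mul; apply dvd_pow_sub1; auto).
  set (s0 := cc (Seg R pad false)).
  set (M := Z.to_nat m).
  set (k := (R * M + r)%nat).
  set (ell := (lam * M + r)%nat).
  set (C0 := pw 2 (r + eps) * U - pw 3 r * m * s0 - pw 3 r + pw 2 r - pw 3 r * a).
  set (tau := (pw 3 ((R - 1) * (r + R - 1)) * C0) mod m).
  assert (Htau : 0 <= tau < m) by (apply Z.mod_pos_bound; auto).
  set (tn := Z.to_nat tau).
  set (bs := repeat true tn ++ repeat false (M - tn)).
  assert (Hbsl : length bs = M) by (unfold bs; rewrite length_app, !repeat_length; unfold tn, M; lia).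
  assert (Hbso : oo bs = tn) by (unfold bs; rewrite oo_app, oo_ones, oo_zeros; lia).
  set (V0 := Wl R pad bs ++ repeat true r).
  assert (HooV : oo V0 = k) by (unfold V0, k; rewrite oo_app, oo_Wl, oo_ones, Hbsl; auto).
  assert (HlenV : length V0 = ell) by (unfold V0, ell; rewrite length_app, len_Wl, repeat_length, Hbsl; auto).
  assert (HccV : cc V0 = pw 3 r * cc (Wl R pad bs) + pw 2 (lam * M) * (pw 3 r - pw 2 r)).
  { unfold V0. rewrite cc_app, oo_ones, cc_ones, len_Wl, Hbsl by auto. reflexivity. }
  set (A := pw 2 (ell + eps) * U).
  set (zz := cc V0 + pw 3 k * a).
  assert (HA3 : ~ (3 | A)).
  { unfold A. apply not3_mul; auto. clear. induction (ell + eps)%nat.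
    - rewrite pw_0. intros H. apply Z.divide_1_r in H. lia.
    - rewrite pw_S. apply not3_mul; auto. intros [c Hc]; lia. }
  assert (Hk : (pw 3 k = pw 3 (R * M) * pw 3 r)) by (unfold k; apply pw_add).
  assert (Hell : (pw 2 ell = pw 2 (lam * M) * pw 2 r)) by (unfold ell; apply pw_add).
  destruct (digits r0 w h Hhdef Hw (k + t - S r0) A zz HA3) as [f Hf].
  { destruct Hf0 as [c Hc].
    exists (cc (Wl R pad bs) + pw 2 (lam * M) + pw 3 (R * M) * a - pw 2 (lam * M) * pw 2 r * c).
    unfold zz, A. rewrite HccV, Hk, (pw_add 2 ell eps), Hell, Heps. change (S r0) with r.
    change (pw 3 (S r0)) with (pw 3 r) in Hc. assert (E1 : 2 * pw 4 f0 * U = c * pw 3 r - 1) by lia.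
    assert (E2 : pw 2 (lam * M) * pw 2 r * (2 * pw 4 f0 * U) = pw 2 (lam * M) * pw 2 r * (c * pw 3 r - 1)) by (rewrite E1; reflexivity).
    lia. }
  replace (S r0 + (k + t - S r0))%nat with (k + t)%nat in Hf by (unfold k, r; lia).
  set (G := (eps + 2 * Q * f)%nat).
  assert (HG : pw 2 (ell + G) = pw 2 (ell + eps) * pw h f).
  { unfold G. rewrite Nat.add_assoc, pw_add, pw_mul. reflexivity. }
  set (E := A * pw h f - zz).
  assert (HmE : (m | E)).
  { set (T0 := pw 3 ((R - 1) * (r + R - 1)) * C0).
    assert (HP : pw 2 (ell + eps) = pw 2 (lam*M) * pw 2 r * pw 2 eps) by (rewrite pw_add, Hell; ring).
    assert (HS : pw 3 (r + R - 1) = pw 3 r * pw 3 (R - 1)) by (rewrite <- pw_add; f_equal; lia).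
    assert (HS' : pw 3 (R * (r + R - 1)) = pw 3 (r + R - 1) * pw 3 ((R-1)*(r+R-1))) by (rewrite <- pw_add; f_equal; nia).
    assert (Hpm : pw 2 (r + eps) = pw 2 r * pw 2 eps) by apply pw_add.
    assert (Hid : A - zz = (pw 2 (lam*M) - 1) * (pw 2 r * pw 2 eps * U - pw 3 r + pw 2 r)
       - pw 3 r * (cc (Wl R pad bs) - (m * s0 + tau * pw 3 (R-1)))
       - (pw 3 (R*M) - 1) * (pw 3 r * a) - (pw 3 (R*(r+R-1)) - 1) * C0 + pw 3 (r+R-1) * (T0 - tau)).
    { unfold A, zz. rewrite HP, HccV, Hk, HS', HS. unfold T0, C0. rewrite Hpm. ring. }
    unfold E. replace (A * pw h f - zz) with (A * (pw h f - 1) + (A - zz)) by ring.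
    apply Z.divide_add_r; [apply Z.divide_mul_r, dvd_pow_sub1; auto|].
    rewrite Hid.
    assert (HW := cc_Wl R pad m bs HR1 HR Hlm). rewrite Hbsl, Hbso in HW.
    unfold M, tn in HW. rewrite !Z2Nat.id in HW by lia. fold s0 in HW.
    assert (H1 : (m | pw 2 (lam * M) - 1)) by (rewrite pw_mul; apply dvd_pow_sub1; auto).
    assert (H2 : (m | pw 3 (R * M) - 1)) by (rewrite pw_mul; apply dvd_pow_sub1; auto).
    assert (H3 : (m | pw 3 (R * (r + R - 1)) - 1)) by (rewrite pw_mul; apply dvd_pow_sub1; auto).
    assert (H4 : (m | T0 - tau)).
    { exists (T0 / m). unfold tau. fold T0. pose proof (Z.div_mod T0 m ltac:(lia)). lia. }
    repeat first [apply Z.divide_add_r | apply Z.divide_sub_r].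
    all: try rewrite Z.divide_opp_r.
    all: first [(apply Z.divide_mul_l; assumption) | (apply Z.divide_mul_r; assumption)]. }
  destruct Hf as [c Hc]. fold E in Hc.
  set (F := c * pw 3 t).
  assert (HEF : E = pw 3 k * F) by (unfold F; rewrite Hc, pw_add; ring).
  assert (HmF : (m | F)).
  { apply Gauss with (pw 3 k). rewrite <- HEF. auto. apply rel_prime_pw; auto. }
  assert (HdF : (pw 3 t * m | F)).
  { assert (Hmc : (m | c)).
    { apply Gauss with (pw 3 t). unfold F in HmF. rewrite Z.mul_comm. auto. apply rel_prime_pw; auto. }
    destruct Hmc as [c' Hc']. exists c'. unfold F. rewrite Hc'. ring. }
  set (v := V0 ++ repeat false G ++ [true] ++ repeat false z).
  exists (a + F), (length v). split.
  2: { replace (a + F - a) with F by ring. auto. }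
  apply lemA.
  assert (Hoo : oo v = S k) by (unfold v; rewrite !oo_app, !oo_zeros, HooV; simpl; lia).
  assert (Hlen : length v = (ell + G + S z)%nat) by (unfold v; rewrite !length_app, !repeat_length, HlenV; simpl; lia).
  assert (Hccr : cc (repeat false G ++ [true] ++ repeat false z) = pw 2 G).
  { rewrite !cc_app, !oo_app, !cc_zeros, !oo_zeros. cbn [cc oo]. rewrite !pw_0, repeat_length. ring. }
  assert (Hoor : oo (repeat false G ++ [true] ++ repeat false z) = 1%nat).
  { rewrite !oo_app, !oo_zeros. reflexivity. }
  assert (Hcc : cc v = 3 * cc V0 + pw 2 ell * pw 2 G).
  { unfold v. rewrite cc_app, Hccr, Hoor, HlenV. change (pw 3 1) with 3. ring. }
  rewrite Hoo, Hlen, Hcc, pw_S, !pw_add.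
  assert (X1 : pw 2 ell * pw 2 G * (pw 2 (S z) * u) = pw 2 ell * pw 2 G * (1 + 3 * U)) by (rewrite HzU; reflexivity).
  assert (X2 : pw 2 ell * pw 2 G * U = A * pw h f).
  { unfold A. rewrite <- pw_add, HG. ring. }
  unfold E, zz in HEF. lia.
Qed.

Lemma not2_pw3 o : ~ (2 | pw 3 o).
Proof. destruct (pw3_odd o) as [s Hs]. rewrite Hs. intros [c Hc]. lia. Qed.

Theorem mainTheorem1 (f : nat -> nat) (a d : Z) (ha : 0 < a) (hd : 0 < d) :
  sufficient (fun s => exists n : nat,
                 s = 2 ^ (Z.of_nat (f n)) * (a + d * Z.of_nat n)).
Proof.
  split.
  { intros s [n ->]. apply Z.mul_pos_pos. apply Z.pow_pos_nonneg; lia. nia. }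
  intros x hx.
  destruct (split_pow 2 ltac:(lia) d hd) as [e [d1 [Hd Hd1]]].
  assert (Hd1p : 0 < d1) by (pose proof (pw_pos 2 e ltac:(lia)); nia).
  set (a1 := Titer e a). set (o := oT e a). set (D1 := pw 3 o * d1).
  assert (Hter : forall N, Titer e (a + d * N) = a1 + D1 * N).
  { intros N. rewrite Hd. replace (a + pw 2 e * d1 * N) with (a + pw 2 e * (d1 * N)) by ring.
    rewrite terras. unfold a1, D1, o. ring. }
  assert (Ha1 : 0 < a1) by (apply Titer_pos; auto).
  assert (HD1 : 0 < D1) by (unfold D1; pose proof (pw_pos 3 o ltac:(lia)); nia).
  assert (HD12 : ~ (2 | D1)).
  { unfold D1. apply (fun H => H) . intros H. apply prime_mult in H; [|apply prime_2].
    destruct H; [apply (not2_pw3 o)|apply Hd1]; auto. }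
  destruct (split_pow 3 ltac:(lia) D1 HD1) as [t [m [HDm Hm3]]].
  assert (Hmp : 0 < m) by (pose proof (pw_pos 3 t ltac:(lia)); nia).
  assert (Hm2 : ~ (2 | m)).
  { intros [c Hc]. apply HD12. exists (pw 3 t * c). rewrite HDm, Hc. ring. }
  destruct (split_pow 2 ltac:(lia) x hx) as [ex [q [Hx Hq]]].
  assert (Hqp : 0 < q) by (pose proof (pw_pos 2 ex ltac:(lia)); nia).
  destruct (par q) as [q' [Hq' | Hq']].
  { exfalso. apply Hq. exists q'. lia. }
  set (u := Titer (1 + ex) x).
  assert (Hu : u = 3 * q' + 2).
  { unfold u. rewrite Titer_add, Hx, halving, Hq'. unfold Titer; simpl. apply T_odd. }
  assert (Hup : 0 < u) by lia.
  assert (Hu3 : ~ (3 | u)) by (rewrite Hu; intros [c Hc]; lia).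
  destruct (core u t m a1 Hup Hu3 Hmp Hm2 Hm3) as [y [n0 [Hy Hya]]].
  assert (Hyp : 0 < y).
  { destruct (Z_lt_le_dec 0 y) as [|Hle]; auto. pose proof (Titer_nonpos n0 y Hle). lia. }
  assert (Hr2 : rel_prime D1 2) by (apply relp_of_prime; auto; apply prime_2).
  destruct (period 2 D1 HD1 Hr2) as [P [HP1 HP]].
  set (J := Z.to_nat a1).
  set (y' := pw 2 (P * J) * y).
  assert (HyJ : a1 < pw 2 (P * J)).
  { assert (Z.of_nat J < pw 2 J) by (apply Z.pow_gt_lin_r; lia).
    replace (P * J)%nat with (J + (P - 1) * J)%nat by nia. rewrite pw_add.
    pose proof (pw_pos 2 ((P - 1) * J) ltac:(lia)). unfold J in *. nia. }
  assert (Hy'a : a1 < y') by (unfold y'; nia).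
  assert (HDy : (D1 | y' - a1)).
  { replace (y' - a1) with ((pw 2 (P * J) - 1) * y + (y - a1)) by (unfold y'; ring).
    apply Z.divide_add_r. apply Z.divide_mul_l. rewrite pw_mul. apply dvd_pow_sub1; auto.
    rewrite HDm. auto. }
  destruct HDy as [Nz HNz].
  assert (HNz0 : 0 <= Nz) by nia.
  set (N := Z.to_nat Nz).
  exists (2 ^ Z.of_nat (f N) * (a + d * Z.of_nat N)). split.
  { exists N. reflexivity. }
  exists (1 + ex)%nat, (n0 + P * J + e + f N)%nat. fold u.
  rewrite !Titer_add. change (2 ^ Z.of_nat (f N)) with (pw 2 (f N)). rewrite halving.
  rewrite Hter. unfold N. rewrite Z2Nat.id by lia.
  replace (a1 + D1 * Nz) with y' by lia. unfold y'. rewrite halving. auto.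
Qed.
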